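(* Let $n\geq 1$. There is no non-trivial u-p-cycle $u=u_1\cdots u_N$ for $n$-permutations in which the $\Diamond$'s occur periodically with period $3$, i.e., in which $3$ divides $N$ and there is $r\in\{0,1,2\}$ such that for every position $i$, $u_i=\Diamond$ if and only if $i\equiv r\pmod 3$.
   Context: An $n$-permutation is a permutation of $\{1,\ldots,n\}$. For a word $w$ of distinct numbers, $\mathrm{red}(w)$ is obtained by replacing the $i$-th smallest letter by $i$. Let $\Diamond$ be a symbol not among the integers. A word $f=f_1\cdots f_n$ over the positive integers together with $\Diamond$, whose integer letters are pairwise distinct, covers an $n$-permutation $\pi$ if one can substitute real numbers for the occurrences of $\Diamond$ (independently) so that the resulting word has $n$ pairwise distinct entries and reduces to $\pi$; equivalently, $f_i<f_j\iff\pi_i<\pi_j$ for all positions $i,j$ holding integers. A u-p-cycle for $n$-permutations is a cyclic word $u_1\cdots u_N$, $N\geq n$, over this alphabet containing at least one $\Diamond$, indices read modulo $N$, such that each of its $N$ cyclic factors $u_iu_{i+1}\cdots u_{i+n-1}$ ($1\leq i\leq N$) has pairwise distinct integer letters and every $n$-permutation is covered by exactly one of these factors. It is trivial if all its letters are $\Diamond$. *)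

(* Defs.v *)
From mathcomp Require Import all_boot all_fingroup.
Set Implicit Arguments. Unset Strict Implicit. Unset Printing Implicit Defensive.

(* Letters: [None] is the symbol Diamond, [Some k] is the integer k. *)
Definition letter := option nat.

Definition covers (n : nat) (f : seq letter) (pi : 'S_n) : Prop :=
  size f = n /\
  forall (i j : 'I_n) (a b : nat),
    nth None f i = Some a -> nth None f j = Some b ->
    (a < b) = (pi i < pi j).

Definition distinct_ints (f : seq letter) : Prop := uniq (pmap id f).

(* the cyclic factor u_i ... u_{i+n-1} (0-based start i, indices mod N) *)
Definition cfactor (u : seq letter) (n i : nat) : seq letter :=
  [seq nth None u ((i + j) %% size u) | j <- iota 0 n].

Definition is_upcycle (n : nat) (u : seq letter) : Prop :=
  let N := size u in
  [/\ n <= N,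
      all (fun x => if x is Some k then 0 < k else true) u,
      None \in u,
      (forall i, i < N -> distinct_ints (cfactor u n i)) &
      (forall pi : 'S_n, exists! i : 'I_N, covers (cfactor u n i) pi)].

Definition trivial_cycle (u : seq letter) : Prop := all (fun x => x == None) u.

(* Diamonds occur with period 3, with 1-based positions 1..N. *)
Definition diamonds_period3 (u : seq letter) : Prop :=
  3 %| size u /\
  exists r, r < 3 /\
    forall i, i < size u -> (nth None u i = None <-> i.+1 = r %[mod 3]).

(* Main.v *)
Require Import Defs.
From mathcomp Require Import all_boot all_fingroup.
From mathcomp Require Import zify.

Lemma card_lt_key n (k : nat -> nat) (i : 'I_n) : #|[set j : 'I_n | k j < k i]| < n.
Proof.
have H : [set j : 'I_n | k j < k i] \subset [set~ i].
  apply/subsetP => j; rewrite !inE => H; apply/eqP => E; move: H; rewrite E ltnn.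
  by [].
apply: (leq_ltn_trans (subset_leq_card H)).
rewrite cardsC1 card_ord. have h : 0 < n := leq_ltn_trans (leq0n _) (ltn_ord i). by rewrite prednK.
Qed.

Lemma perm_key n (k : nat -> nat) : (forall i j : 'I_n, k i = k j -> i = j) ->
  exists pi : 'S_n, forall i j : 'I_n, (pi i < pi j) = (k i < k j).
Proof.
move=> kinj.
pose f (i : 'I_n) : 'I_n := Ordinal (card_lt_key n k i).
have lt_sub : forall a b : 'I_n, k a < k b ->
    #|[set x : 'I_n | k x < k a]| < #|[set x : 'I_n | k x < k b]|.
  move=> a b lab; apply: proper_card; apply/properP; split.
  - apply/subsetP => x; rewrite !inE => h; exact: ltn_trans h lab.
  - by exists a; rewrite !inE ?ltnn.
have mono : forall i j, (f i < f j) = (k i < k j).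
  move=> i j /=.
  case: (ltngtP (k i) (k j)) => h.
  - by rewrite lt_sub.
  - apply/negbTE; rewrite -leqNgt; exact: ltnW (lt_sub _ _ h).
  - by rewrite (kinj _ _ h) ltnn.
have finj : injective f.
  move=> i j E; apply: kinj; case: (ltngtP (k i) (k j)) => // h.
  - by move: (mono i j); rewrite h E ltnn.
  - by move: (mono j i); rewrite h E ltnn.
by exists (perm finj) => i j; rewrite !permE mono.
Qed.

Lemma uniq_nth_some (s : seq letter) i j a : uniq (pmap id s) -> i < size s -> j < size s ->
  nth None s i = Some a -> nth None s j = Some a -> i = j.
Proof.
elim: s i j => [|x s IH] i j //=.
have memS : forall k, k < size s -> nth None s k = Some a -> a \in pmap id s.
  move=> k hk hn; rewrite mem_pmap map_id -hn; exact: mem_nth.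
case: x => [y|] /=.
- move=> /andP[ya us].
  case: i j => [|i] [|j] //= hi hj.
  + move=> [E] hn; subst y. by move: ya; rewrite (memS j hj hn).
  + move=> hn [E]; subst y. by move: ya; rewrite (memS i hi hn).
  + move=> h1 h2; congr S; exact: IH h1 h2.
- move=> us; case: i j => [|i] [|j] //= hi hj h1 h2; try congr S; try exact: IH h1 h2.
Qed.

Lemma AL n (w1 w2 : seq letter) (e : nat) :
  size w1 = n -> size w2 = n -> uniq (pmap id w2) ->
  (forall i j a b, i < n -> j < n -> nth None w1 i = Some a -> nth None w1 j = Some b -> (a < b) = (i < j)) ->
  (e < n -> nth None w1 e = None) ->
  (forall i j a b, i != e -> j != e -> i < j -> j < n ->
     nth None w2 i = Some a -> nth None w2 j = Some b -> a < b) ->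
  exists pi : 'S_n, covers w1 pi /\ covers w2 pi.
Proof.
move=> s1 s2 u2 H1 H2 H3.
pose c := if nth None w2 e is Some c then c else 0.
pose P (t : 'I_n) := (val t != e) && (if nth None w2 t is Some b then b < c else false).
pose M := \max_(t < n | P t) (val t).+1.
pose k t := if t == e then 2 * M + 1 else 2 * t + 2.
have kinj : forall i j : 'I_n, k i = k j -> i = j.
  move=> i j; rewrite /k; case: eqP => hi; case: eqP => hj; try lia.
  - by move=> _; apply: val_inj; rewrite /= hi hj.
  - by move=> h; apply: val_inj => /=; lia.
have [pi Hpi] := perm_key n k kinj.
exists pi; split; split => // i j a b ha hb; rewrite Hpi.
- have ie : val i != e.
    apply/eqP => E; have := ltn_ord i; rewrite E => en; move: ha; by rewrite E H2.
  have je : val j != e.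
    apply/eqP => E; have := ltn_ord j; rewrite E => en; move: hb; by rewrite E H2.
  rewrite /k (negbTE ie) (negbTE je) (H1 i j a b) //.
  by apply/idP/idP; lia.
- have ab : (a == b) = (val i == val j).
    apply/eqP/eqP => [E|E].
    + subst b; have si : i < size w2 by rewrite s2.
      have sj : j < size w2 by rewrite s2.
      exact: (uniq_nth_some w2 i j a u2 si sj ha hb).
    + by move: ha hb; rewrite E => -> [].
  have side : forall (i j : 'I_n) a b, val i = e -> val j != e ->
      nth None w2 i = Some a -> nth None w2 j = Some b -> a != b ->
      (a < b) = (2 * M + 1 < 2 * j + 2).
    move=> i' j' a' b' ie je ha' hb' neq.
    have ca : c = a' by rewrite /c -ie ha'.
    case: (ltngtP a' b') => hab.
    + symmetry; apply/idP; suff : M <= j' by lia.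
      apply/bigmax_leqP => t; rewrite /P => /andP[te].
      case ht: (nth None w2 t) => [b''|] // hlt.
      case: (ltngtP t j') => tj //.
      * have := H3 j' t b' b'' je te tj (ltn_ord t) hb' ht. rewrite ca in hlt. lia.
      * have : t = j' by apply: val_inj.
        move=> E; subst t. move: ht; rewrite hb' => -[E]; subst b''. rewrite ca in hlt. lia.
    + symmetry; apply/negbTE; rewrite -leqNgt.
      have : j'.+1 <= M.
        apply: (@leq_bigmax_cond _ _ _ j'). by rewrite /P je hb' ca hab.
      lia.
    + by rewrite hab eqxx in neq.
  case: (eqVneq (val i) e) => ie; case: (eqVneq (val j) e) => je.
  + have E : i = j by apply: val_inj; rewrite ie je.
    subst j; move: ha; rewrite hb => -[->]; by rewrite !ltnn.
  + rewrite /k ie eqxx (negbTE je). apply: side ha hb _ => //.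
    by apply/eqP => E; move: ab; rewrite E eqxx ie eq_sym (negbTE je).
  + rewrite /k je eqxx (negbTE ie).
    have nab : b != a.
      by apply/eqP => E; move: ab; rewrite E eqxx je (negbTE ie).
    have h := side j i b a je ie hb ha nab.
    case: (ltngtP a b) => hab.
    * move: h; rewrite ltnNge ltnW //= => h. symmetry; apply/negP => h'. lia.
    * move: h; rewrite hab => /esym h. lia.
    * by rewrite hab eqxx in nab.
  + rewrite /k (negbTE ie) (negbTE je).
    case: (ltngtP i j) => hij.
    * have hab := H3 i j a b ie je hij (ltn_ord j) ha hb.
      have -> : (2*i+2 < 2*j+2) = true by apply/idP; clear -hij; lia.
      by rewrite hab.
    * have := H3 j i b a je ie hij (ltn_ord i) hb ha. move=> hba.
      have -> : (a < b) = false by apply/negbTE; rewrite -leqNgt ltnW.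
      have -> : (2*i+2 < 2*j+2) = false by apply/negbTE; rewrite -leqNgt; clear -hij; lia.
      by [].
    * have E : i = j by apply: val_inj.
      subst j; move: ha; rewrite hb => -[->]; by rewrite !ltnn.
Qed.

Theorem theorem3 (n : nat) (hn : 1 <= n) (u : seq letter) :
  ~ [/\ is_upcycle n u, ~ trivial_cycle u & diamonds_period3 u].
Proof.
case; rewrite /is_upcycle /=.
case=> nN _ _ dist uniqc _ [d3 [r [r3 Hr]]].
set N := size u in nN dist uniqc d3 Hr.
have [k Nk] := dvdnP d3.
have N3 : 3 <= N by lia.
have N0 : 0 < N by lia.
have Dn : forall p, p.+1 %% 3 = r -> nth None u (p %% N) = None.
  move=> p hp.
  have hpN : p %% N < N by rewrite ltn_pmod.
  apply/(Hr _ hpN).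
  have e3 : (p %% N).+1 %% 3 = p.+1 %% 3.
    rewrite {2}(divn_eq p N) Nk.
    move: (p %/ N) (p %% N) => x y. lia.
  rewrite e3 hp modn_small //.
have wn : forall i t, t < n -> nth None (cfactor u n i) t = nth None u ((i + t) %% N).
  move=> i t ht; rewrite /cfactor (nth_map 0) ?size_iota // nth_iota //.
have sz : forall i, size (cfactor u n i) = n.
  by move=> i; rewrite /cfactor size_map size_iota.
have [s [cov1 uniq1]] := uniqc (1%g).
have H1 : forall i j a b, i < n -> j < n -> nth None (cfactor u n s) i = Some a ->
    nth None (cfactor u n s) j = Some b -> (a < b) = (i < j).
  move=> i j a b hi hj ha hb.
  have := cov1.2 (Ordinal hi) (Ordinal hj) a b ha hb. by rewrite !perm1.
have H1u : forall i j a b, i < n -> j < n -> nth None u ((s + i) %% N) = Some a ->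
    nth None u ((s + j) %% N) = Some b -> (a < b) = (i < j).
  move=> i j a b hi hj; rewrite -!wn //; exact: H1.
have finish : forall d e, 0 < d < N ->
    (e < n -> nth None u ((s + e) %% N) = None) ->
    (forall i j a b, i != e -> j != e -> i < j -> j < n ->
       nth None u ((s + d + i) %% N) = Some a -> nth None u ((s + d + j) %% N) = Some b -> a < b) ->
    False.
  move=> d e hd He H3.
  have s'lt : (s + d) %% N < N by rewrite ltn_pmod.
  have He' : e < n -> nth None (cfactor u n s) e = None.
    by move=> he; rewrite wn // He.
  have H3' : forall i j a b, i != e -> j != e -> i < j -> j < n ->
       nth None (cfactor u n (Ordinal s'lt)) i = Some a ->
       nth None (cfactor u n (Ordinal s'lt)) j = Some b -> a < b.
    move=> i j a b ie je ij jn; have hi : i < n := ltn_trans ij jn.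
    rewrite !wn // /= !modnDml.
    exact: H3.
  have [pi [c1 c2]] := AL n _ _ e (sz s) (sz (Ordinal s'lt)) (dist _ s'lt) H1 He' H3'.
  have [s0 [_ u0]] := uniqc pi.
  have E1 := u0 _ c1; have E2 := u0 _ c2.
  have := congr1 val (etrans (esym E1) E2); rewrite /=.
  have sN := ltn_ord s.
  case: (ltnP (s + d) N) => h.
  + rewrite modn_small //; lia.
  + rewrite -(subnK h) modnDr modn_small; lia.
have sN := ltn_ord s.
case: (eqVneq ((s + N) %% 3) r) => c1.
  apply: (finish (N-1) n); first lia.
    by rewrite ltnn.
  move=> i j a b _ _ ij jn.
  case: i ij => [|i] ij.
    rewrite addn0 Dn; last lia. by [].
  rewrite (_ : s + (N-1) + i.+1 = s + i + N); last lia.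
  rewrite (_ : s + (N-1) + j = s + (j-1) + N); last lia.
  rewrite !modnDr => ha hb.
  have := H1u i (j-1) a b ltac:(lia) ltac:(lia) ha hb.
  have -> : (i < j - 1) = true by apply/idP; lia.
  by move=> ->.
case: (eqVneq ((s + n + 1) %% 3) r) => c2.
  apply: (finish 1 n); first lia.
    by rewrite ltnn.
  move=> i j a b _ _ ij jn.
  case: (eqVneq j (n-1)) => jn1.
    rewrite (_ : s + 1 + j = s + n); last lia.
    move=> _; rewrite Dn; last lia. by [].
  rewrite (_ : s + 1 + i = s + (i + 1)); last lia.
  rewrite (_ : s + 1 + j = s + (j + 1)); last lia.
  move=> ha hb.
  have := H1u (i+1) (j+1) a b ltac:(lia) ltac:(lia) ha hb.
  have -> : (i + 1 < j + 1) = true by apply/idP; lia.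
  by move=> ->.
case: (eqVneq ((s + n) %% 3) r) => c3.
  apply: (finish 1 (n-1)); first lia.
    move=> _; rewrite Dn //; lia.
  move=> i j a b _ jn1 ij jn.
  rewrite (_ : s + 1 + i = s + (i + 1)); last lia.
  rewrite (_ : s + 1 + j = s + (j + 1)); last lia.
  move=> ha hb.
  have := H1u (i+1) (j+1) a b ltac:(lia) ltac:(lia) ha hb.
  have -> : (i + 1 < j + 1) = true by apply/idP; lia.
  by move=> ->.
case: (eqVneq ((s + 1) %% 3) r) => c4.
  apply: (finish (N-1) 0); first lia.
    move=> _; rewrite Dn //; lia.
  move=> i j a b i0 j0 ij jn.
  rewrite (_ : s + (N-1) + i = s + (i-1) + N); last lia.
  rewrite (_ : s + (N-1) + j = s + (j-1) + N); last lia.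
  rewrite !modnDr => ha hb.
  have := H1u (i-1) (j-1) a b ltac:(lia) ltac:(lia) ha hb.
  have -> : (i - 1 < j - 1) = true by apply/idP; lia.
  by move=> ->.
have n3 : n %% 3 = 0 /\ (s + 2) %% 3 = r by lia.
apply: (finish 2 (n-2)); first lia.
  move=> _; rewrite Dn //; lia.
move=> i j a b _ jn2 ij jn.
case: (eqVneq j (n-1)) => jn1.
  rewrite (_ : s + 2 + j = s + n + 1); last lia.
  move=> _; rewrite Dn; last lia. by [].
rewrite (_ : s + 2 + i = s + (i + 2)); last lia.
rewrite (_ : s + 2 + j = s + (j + 2)); last lia.
move=> ha hb.
have := H1u (i+2) (j+2) a b ltac:(lia) ltac:(lia) ha hb.
have -> : (i + 2 < j + 2) = true by apply/idP; lia.
by move=> ->.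
Qed.
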